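(* Let $X$ be a real Banach space, $T:X\rightrightarrows X^*$ monotone and $\mu>0$. The following are equivalent: (1) for every $\varepsilon>0$ and every $z_0\in X$, the norm closure of $R(T(\cdot+z_0)+\mu J_\varepsilon)$ equals $X^*$; (2) for every $\varepsilon>0$ and every $z_0\in X$, $R(T(\cdot+z_0)+\mu J_\varepsilon)=X^*$.
   Context: A point-to-set operator $T:X\rightrightarrows X^*$ is a subset $T\subset X\times X^*$ with $T(x)=\{x^*:(x,x^* )\in T\}$; it is monotone if $\langle x-y,x^*-y^*\rangle\ge0$ for all $(x,x^* ),(y,y^* )\in T$. For $\varepsilon\ge0$, $J_\varepsilon(x)=\{x^*\in X^*:\ \tfrac12\|x\|^2+\tfrac12\|x^*\|^2\le\langle x,x^*\rangle+\varepsilon\}$. For $z_0\in X$, $T(\cdot+z_0)+\mu J_\varepsilon$ denotes the operator $x\mapsto\{a^*+\mu b^*: a^*\in T(x+z_0),\ b^*\in J_\varepsilon(x)\}$, and $R(S)=\bigcup_{x\in X}S(x)$ denotes the range of an operator $S$. *)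

(* Defs.v *)
From Stdlib Require Import Reals Lra ClassicalEpsilon.
Open Scope R_scope.

Record Banach : Type := {
  carrier :> Type;
  vzero : carrier;
  vadd : carrier -> carrier -> carrier;
  vopp : carrier -> carrier;
  vscal : R -> carrier -> carrier;
  vnorm : carrier -> R;
  vadd_assoc : forall x y z, vadd x (vadd y z) = vadd (vadd x y) z;
  vadd_comm : forall x y, vadd x y = vadd y x;
  vadd_0 : forall x, vadd x vzero = x;
  vadd_opp : forall x, vadd x (vopp x) = vzero;
  vscal_1 : forall x, vscal 1 x = x;
  vscal_assoc : forall a b x, vscal a (vscal b x) = vscal (a * b) x;
  vscal_distr_v : forall a x y, vscal a (vadd x y) = vadd (vscal a x) (vscal a y);
  vscal_distr_s : forall a b x, vscal (a + b) x = vadd (vscal a x) (vscal b x);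
  vnorm_nonneg : forall x, 0 <= vnorm x;
  vnorm_eq0 : forall x, vnorm x = 0 -> x = vzero;
  vnorm_scal : forall a x, vnorm (vscal a x) = Rabs a * vnorm x;
  vnorm_triangle : forall x y, vnorm (vadd x y) <= vnorm x + vnorm y;
  vcomplete : forall u : nat -> carrier,
    (forall e, 0 < e -> exists N, forall n m, (N <= n)%nat -> (N <= m)%nat ->
        vnorm (vadd (u n) (vopp (u m))) < e) ->
    exists l, forall e, 0 < e -> exists N, forall n, (N <= n)%nat ->
        vnorm (vadd (u n) (vopp l)) < e
}.

Arguments vzero {_}. Arguments vadd {_}. Arguments vopp {_}.
Arguments vscal {_}. Arguments vnorm {_}.

Record dual (X : Banach) : Type := {
  dfun :> X -> R;
  dlin_add : forall x y, dfun (vadd x y) = dfun x + dfun y;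
  dlin_scal : forall a x, dfun (vscal a x) = a * dfun x;
  dbounded : exists C, forall x, Rabs (dfun x) <= C * vnorm x
}.

Definition dnorm {X : Banach} (f : X -> R) : R :=
  epsilon (inhabits 0)
    (is_lub (fun r => exists x : X, vnorm x <= 1 /\ r = Rabs (f x))).

Definition pair {X : Banach} (x : X) (xs : dual X) : R := xs x.

Definition operator (X : Banach) := X -> dual X -> Prop.

Definition monotone {X : Banach} (T : operator X) : Prop :=
  forall x y (xs ys : dual X), T x xs -> T y ys ->
    0 <= pair (vadd x (vopp y)) xs - pair (vadd x (vopp y)) ys.

Definition Jeps {X : Banach} (eps : R) : operator X :=
  fun x xs => / 2 * vnorm x ^ 2 + / 2 * dnorm xs ^ 2 <= pair x xs + eps.

Definition shift_sum {X : Banach} (T : operator X) (z0 : X) (mu eps : R)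
  : operator X :=
  fun x xs => exists a b : dual X, T (vadd x z0) a /\ Jeps eps x b /\
    forall y, xs y = a y + mu * b y.

Definition range {X : Banach} (S : operator X) : dual X -> Prop :=
  fun xs => exists x, S x xs.

Definition dclosure {X : Banach} (A : dual X -> Prop) : dual X -> Prop :=
  fun xs => forall d, 0 < d -> exists s, A s /\ dnorm (fun y => s y - xs y) < d.

(* Main.v *)
Require Import Defs.
From Stdlib Require Import Reals Lra Psatz ClassicalEpsilon.
Open Scope R_scope.

Definition islin {X : Banach} (f : X -> R) : Prop :=
  (forall x y, f (vadd x y) = f x + f y) /\
  (forall a x, f (vscal a x) = a * f x) /\
  (exists C, forall x, Rabs (f x) <= C * vnorm x).

Lemma dual_lin {X : Banach} (f : dual X) : islin f.
Proof. split; [apply dlin_add | split; [apply dlin_scal | apply dbounded]]. Qed.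

Lemma vscal0 {X : Banach} (x : X) : vscal 0 x = vzero.
Proof.
  set (u := vscal 0 x).
  assert (H : u = vadd u u) by (unfold u; rewrite <- vscal_distr_s, Rplus_0_l; reflexivity).
  symmetry; transitivity (vadd (vadd u u) (vopp u)); [now rewrite <- H, vadd_opp|].
  rewrite <- vadd_assoc, vadd_opp, vadd_0; reflexivity.
Qed.

Lemma vnorm0 {X : Banach} : vnorm (@vzero X) = 0.
Proof. rewrite <- (vscal0 (@vzero X)), vnorm_scal, Rabs_R0; ring. Qed.

Lemma lin0 {X : Banach} (f : X -> R) : islin f -> f vzero = 0.
Proof.
  intros [Ha _]. pose proof (Ha vzero vzero) as H. rewrite vadd_0 in H. lra.
Qed.

Lemma linopp {X : Banach} (f : X -> R) y : islin f -> f (vopp y) = - f y.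
Proof.
  intros Hl. pose proof (lin0 f Hl) as H0. destruct Hl as [Ha _].
  pose proof (Ha y (vopp y)) as H. rewrite vadd_opp, H0 in H. lra.
Qed.

Definition Eset {X : Banach} (f : X -> R) :=
  fun r => exists x : X, vnorm x <= 1 /\ r = Rabs (f x).

Lemma dnorm_lub {X : Banach} (f : X -> R) : islin f -> is_lub (Eset f) (dnorm f).
Proof.
  intros Hl. unfold dnorm.
  apply epsilon_spec.
  destruct Hl as [_ [_ [C HC]]].
  assert (Hb : bound (Eset f)).
  { exists (Rmax C 0). intros r [x [Hx ->]].
    pose proof (HC x). pose proof (vnorm_nonneg _ x).
    pose proof (Rmax_l C 0). pose proof (Rmax_r C 0). nra. }
  assert (Hn : exists r, Eset f r).
  { exists (Rabs (f vzero)), vzero. rewrite vnorm0. split; [lra|reflexivity]. }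
  destruct (completeness _ Hb Hn) as [m Hm]. exists m. exact Hm.
Qed.

Lemma dnorm_nonneg {X : Banach} (f : X -> R) : islin f -> 0 <= dnorm f.
Proof.
  intros Hl. destruct (dnorm_lub f Hl) as [Hu _]. apply Hu.
  exists vzero. rewrite vnorm0, (lin0 f Hl), Rabs_R0. split; [lra|reflexivity].
Qed.

Lemma dnorm_bound {X : Banach} (f : X -> R) x : islin f -> Rabs (f x) <= dnorm f * vnorm x.
Proof.
  intros Hl. destruct (dnorm_lub f Hl) as [Hu _].
  destruct (Req_dec (vnorm x) 0) as [H0|H0].
  - apply vnorm_eq0 in H0. subst. rewrite vnorm0, (lin0 f Hl), Rabs_R0. lra.
  - pose proof (vnorm_nonneg _ x) as Hn.
    assert (Hp : 0 < vnorm x) by lra.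
    set (y := vscal (/ vnorm x) x).
    assert (Hy : vnorm y = 1).
    { unfold y. rewrite vnorm_scal, Rabs_right. field. lra.
      left; apply Rinv_0_lt_compat; lra. }
    assert (Hfy : Rabs (f y) <= dnorm f). { apply Hu. exists y. split; [lra|reflexivity]. }
    destruct Hl as [_ [Hs _]]. unfold y in Hfy. rewrite Hs, Rabs_mult, Rabs_right in Hfy.
    2: { left; apply Rinv_0_lt_compat; lra. }
    apply (Rmult_le_compat_r (vnorm x)) in Hfy; [|lra].
    rewrite Rmult_comm, <- Rmult_assoc, Rinv_r, Rmult_1_l in Hfy; lra.
Qed.

Lemma dnorm_le {X : Banach} (f : X -> R) A : islin f -> 0 <= A ->
  (forall x, Rabs (f x) <= A * vnorm x) -> dnorm f <= A.
Proof.
  intros Hl HA H. destruct (dnorm_lub f Hl) as [_ Hl2]. apply Hl2.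
  intros r [x [Hx ->]]. pose proof (H x). nra.
Qed.

Lemma lin_sub {X : Banach} (f g : X -> R) : islin f -> islin g -> islin (fun y => f y - g y).
Proof.
  intros [fa [fs [Cf HCf]]] [ga [gs [Cg HCg]]]. split; [|split].
  - intros; rewrite fa, ga; ring.
  - intros; rewrite fs, gs; ring.
  - exists (Cf + Cg). intros x. pose proof (HCf x). pose proof (HCg x).
    pose proof (Rabs_triang (f x) (- g x)). rewrite Rabs_Ropp in H1.
    unfold Rminus. lra.
Qed.

Lemma abs_div_bound (u v mu : R) : 0 < mu -> Rabs (u + v / mu) <= Rabs u + Rabs v / mu.
Proof.
  intros Hmu. eapply Rle_trans; [apply Rabs_triang|].
  unfold Rdiv. rewrite Rabs_mult, (Rabs_right (/ mu)); [lra|].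
  left; apply Rinv_0_lt_compat; lra.
Qed.

Lemma Rabs_le_inv (x c : R) : Rabs x <= c -> - c <= x <= c.
Proof. intros H. pose proof (Rle_abs x). pose proof (Rle_abs (- x)). rewrite Rabs_Ropp in H1. lra. Qed.

Theorem mainTheorem2 (X : Banach) (T : operator X) (mu : R) :
  monotone T -> 0 < mu ->
  ((forall (eps : R) (z0 : X), 0 < eps ->
      forall xs : dual X, dclosure (range (shift_sum T z0 mu eps)) xs)
   <->
   (forall (eps : R) (z0 : X), 0 < eps ->
      forall xs : dual X, range (shift_sum T z0 mu eps) xs)).
Proof.
  intros Hmono Hmu. split.
  2:{ intros H2 eps z0 Heps xs d Hd. exists xs. split; [now apply H2|].
      eapply Rle_lt_trans; [apply dnorm_le with (A := 0)|exact Hd].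
      - apply lin_sub; apply dual_lin.
      - lra.
      - intros x. rewrite Rminus_diag, Rabs_R0. lra. }
  intros H1 eps z0 Heps xs.
  destruct (H1 eps z0 Heps xs 1 Rlt_0_1) as [s0 [[x0 [a0 [b0 [Ha0 _]]]] _]].
  set (nxs := dnorm xs). set (P := dnorm a0). set (R0 := vnorm x0).
  assert (HnxS : 0 <= nxs) by (apply dnorm_nonneg, dual_lin).
  assert (HP : 0 <= P) by (apply dnorm_nonneg, dual_lin).
  assert (HR0 : 0 <= R0) by apply vnorm_nonneg.
  set (C0 := mu * (eps / 2) + (nxs + 1 + P) * R0).
  set (L := nxs + 1 + P + mu * R0).
  assert (HC0 : 0 <= C0) by (unfold C0; nra).
  assert (HL : 0 <= L) by (unfold L; nra).
  set (M := 1 + 4 * (C0 + L) / mu).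
  assert (HM : 1 <= M).
  { unfold M. assert (0 <= 4 * (C0 + L) / mu); [|lra].
    unfold Rdiv; apply Rmult_le_pos; [lra|left; apply Rinv_0_lt_compat; lra]. }
  set (d := Rmin 1 (Rmin mu (mu * eps / (4 * M + 2)))).
  assert (Hd0 : 0 < d).
  { unfold d. apply Rmin_glb_lt; [lra|]. apply Rmin_glb_lt; [lra|].
    unfold Rdiv; apply Rmult_lt_0_compat; [nra|apply Rinv_0_lt_compat; lra]. }
  assert (Hd1 : d <= 1) by apply Rmin_l.
  assert (Hd2 : d <= mu) by (eapply Rle_trans; [apply Rmin_r|apply Rmin_l]).
  assert (Hd3 : d <= mu * eps / (4 * M + 2)) by (eapply Rle_trans; [apply Rmin_r|apply Rmin_r]).
  assert (Heps2 : 0 < eps / 2) by lra.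
  destruct (H1 (eps/2) z0 Heps2 xs d Hd0) as [s [[x1 [a [b [Ha [Hb Hs]]]]] Hds]].
  set (Dn := dnorm (fun y => s y - xs y)) in Hds.
  assert (Hlsx : islin (fun y => s y - xs y)) by (apply lin_sub; apply dual_lin).
  assert (HDn0 : 0 <= Dn) by (apply dnorm_nonneg; exact Hlsx).
  assert (Hsxb : forall y, Rabs (s y - xs y) <= Dn * vnorm y) by (intros; apply (dnorm_bound _ _ Hlsx)).
  assert (Hsb : forall y, Rabs (s y) <= (nxs + Dn) * vnorm y).
  { intros y. pose proof (Hsxb y). pose proof (dnorm_bound xs y (dual_lin xs)).
    fold nxs in H0. replace (s y) with (xs y + (s y - xs y)) by ring.
    eapply Rle_trans; [apply Rabs_triang|]. lra. }
  set (beta := dnorm b). set (r := vnorm x1).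
  assert (Hbeta : 0 <= beta) by (apply dnorm_nonneg, dual_lin).
  assert (Hr : 0 <= r) by apply vnorm_nonneg.
  assert (Hbb : forall y, Rabs (b y) <= beta * vnorm y) by (intros; apply dnorm_bound, dual_lin).
  assert (Ha0b : forall y, Rabs (a0 y) <= P * vnorm y) by (intros; apply dnorm_bound, dual_lin).
  pose proof (Hmono _ _ _ _ Ha Ha0) as Hm. unfold pair in Hm.
  rewrite !dlin_add, !(linopp _ _ (dual_lin _)), !dlin_add in Hm.
  assert (Hax1 : a x1 = s x1 - mu * b x1) by (rewrite Hs; ring).
  assert (Hax0 : a x0 = s x0 - mu * b x0) by (rewrite Hs; ring).
  unfold Jeps, pair in Hb. fold r beta in Hb.
  assert (F1 : s x1 <= (nxs + Dn) * r) by (pose proof (Hsb x1) as HH; apply Rabs_le_inv in HH; fold r R0 in HH; lra).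
  assert (F2 : - s x0 <= (nxs + Dn) * R0) by (pose proof (Hsb x0) as HH; apply Rabs_le_inv in HH; fold r R0 in HH; lra).
  assert (F3 : b x0 <= beta * R0) by (pose proof (Hbb x0) as HH; apply Rabs_le_inv in HH; fold r R0 in HH; lra).
  assert (F4 : - a0 x1 <= P * r) by (pose proof (Ha0b x1) as HH; apply Rabs_le_inv in HH; fold r R0 in HH; lra).
  assert (F5 : a0 x0 <= P * R0) by (pose proof (Ha0b x0) as HH; apply Rabs_le_inv in HH; fold r R0 in HH; lra).
  assert (HDn1 : Dn < 1) by lra.
  assert (Key : mu / 2 * (r ^ 2 + beta ^ 2) <= C0 + L * (r + beta)).
  { assert (E1 : mu * b x1 <= (nxs + Dn) * r + (nxs + Dn) * R0 + mu * (beta * R0) + P * r + P * R0).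
    { assert (mu * b x0 <= mu * (beta * R0)) by (apply Rmult_le_compat_l; lra). lra. }
    assert (E2 : mu * (/ 2 * r ^ 2 + / 2 * beta ^ 2) <= mu * (b x1 + eps / 2)) by (apply Rmult_le_compat_l; lra).
    assert (E3 : Dn * r <= 1 * r) by (apply Rmult_le_compat_r; lra).
    assert (E4 : Dn * R0 <= 1 * R0) by (apply Rmult_le_compat_r; lra).
    assert (E5 : 0 <= mu * R0 * r) by (apply Rmult_le_pos; [apply Rmult_le_pos|]; lra).
    assert (E6 : 0 <= (nxs + 1 + P) * beta) by (apply Rmult_le_pos; lra).
    unfold C0, L. lra. }
  assert (Ht : r + beta <= M).
  { assert (Hq0 : mu / 4 * (r + beta) ^ 2 <= C0 + L * (r + beta)).
    { assert (0 <= mu * (r - beta) ^ 2) by (apply Rmult_le_pos; [lra|apply pow2_ge_0]). nra. }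
    set (t := r + beta) in *.
    assert (Hq : mu / 4 * t ^ 2 <= C0 + L * t) by exact Hq0.
    destruct (Rle_lt_dec t 1) as [Ht1|Ht1]; [lra|].
    assert (Hq2 : mu / 4 * t <= C0 + L) by nra.
    unfold M. apply (Rmult_le_reg_l (mu / 4)); [lra|].
    replace (mu / 4 * (1 + 4 * (C0 + L) / mu)) with (mu / 4 + (C0 + L)) by (field; lra).
    lra. }
  assert (Hb'add : forall x y, (fun y => b y + (xs y - s y) / mu) (vadd x y) =
     (fun y => b y + (xs y - s y) / mu) x + (fun y => b y + (xs y - s y) / mu) y).
  { intros; simpl; rewrite !dlin_add; field; lra. }
  assert (Hb'scal : forall c x, (fun y => b y + (xs y - s y) / mu) (vscal c x) =
     c * (fun y => b y + (xs y - s y) / mu) x).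
  { intros; simpl; rewrite !dlin_scal; field; lra. }
  assert (Hb'bd : forall x, Rabs ((fun y => b y + (xs y - s y) / mu) x) <= (beta + Dn / mu) * vnorm x).
  { intros x; simpl. eapply Rle_trans; [apply abs_div_bound; exact Hmu|].
    pose proof (Hbb x). pose proof (Hsxb x). rewrite Rabs_minus_sym in H0.
    assert (Rabs (xs x - s x) / mu <= Dn * vnorm x / mu).
    { unfold Rdiv; apply Rmult_le_compat_r; [left; apply Rinv_0_lt_compat; lra|lra]. }
    replace ((beta + Dn / mu) * vnorm x) with (beta * vnorm x + Dn * vnorm x / mu) by (field; lra).
    lra. }
  set (b' := Build_dual X _ Hb'add Hb'scal (ex_intro _ _ Hb'bd)).
  exists x1, a, b'. split; [exact Ha|split].
  2:{ intros y. simpl. rewrite Hs. field. lra. }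
  unfold Jeps, pair. fold r.
  set (delta := Dn / mu).
  assert (Hdel0 : 0 <= delta) by (unfold delta, Rdiv; apply Rmult_le_pos; [lra|left; apply Rinv_0_lt_compat; lra]).
  assert (Hdel1 : delta <= 1).
  { unfold delta. apply (Rmult_le_reg_l mu); [lra|]. replace (mu * (Dn / mu)) with Dn by (field; lra). lra. }
  assert (Hdel2 : delta * (4 * M + 2) <= eps).
  { unfold delta. apply (Rmult_le_reg_l mu); [lra|].
    replace (mu * (Dn / mu * (4 * M + 2))) with (Dn * (4 * M + 2)) by (field; lra).
    assert (Dn <= mu * eps / (4 * M + 2)) by lra.
    apply (Rmult_le_compat_r (4 * M + 2)) in H; [|lra].
    replace (mu * eps / (4 * M + 2) * (4 * M + 2)) with (mu * eps) in H by (field; lra). lra. }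
  assert (Hnb' : dnorm b' <= beta + delta).
  { apply dnorm_le; [apply dual_lin|lra|exact Hb'bd]. }
  assert (Hnb'0 : 0 <= dnorm b') by apply dnorm_nonneg, dual_lin.
  assert (Hcross : (xs x1 - s x1) / mu >= - (delta * r)).
  { pose proof (Hsxb x1). rewrite Rabs_minus_sym in H. apply Rabs_le_inv in H.
    fold r in H. unfold delta.
    replace (- (Dn / mu * r)) with ((- (Dn * r)) / mu) by (field; lra).
    unfold Rdiv. apply Rle_ge, Rmult_le_compat_r; [left; apply Rinv_0_lt_compat; lra|lra]. }
  assert (Hsq : dnorm b' ^ 2 <= (beta + delta) ^ 2) by (apply pow_incr; lra).
  assert (G1 : delta * (r + beta) <= delta * M) by (apply Rmult_le_compat_l; lra).
  assert (G2 : delta * delta <= delta * 1) by (apply Rmult_le_compat_l; lra).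
  change (b' x1) with (b x1 + (xs x1 - s x1) / mu).
  assert (/ 2 * dnorm b' ^ 2 <= / 2 * beta ^ 2 + delta * beta + / 2 * (delta * delta)) by nra.
  lra.
Qed.
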